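(* Let $L$ be a C-loop with nucleus $N$. Then $N$ is a normal subloop (indeed a normal subgroup) of $L$.
   Context: A loop is a set with a binary operation and neutral element $e$ in which left and right division are uniquely solvable. A C-loop is a loop satisfying $x(y(yz))=((xy)y)z$ for all $x,y,z$. The left nucleus is $N_\lambda=\{a: a(yz)=(ay)z\ \forall y,z\}$, the middle nucleus $N_\mu=\{a: y(az)=(ya)z\ \forall y,z\}$, the right nucleus $N_\rho=\{a: y(za)=(yz)a\ \forall y,z\}$, and the nucleus is $N=N_\lambda\cap N_\mu\cap N_\rho$. A subloop $K$ of $L$ is normal if $xK=Kx$, $x(yK)=(xy)K$ and $x(Ky)=(xK)y$ for all $x,y\in L$. *)

(* Defs.v *)
Set Implicit Arguments.

Section LoopDefs.
Variables (L : Type) (op : L -> L -> L) (e : L).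

Definition is_loop : Prop :=
  (forall x, op e x = x /\ op x e = x) /\
  (forall a b, exists! x, op a x = b) /\
  (forall a b, exists! y, op y a = b).

Definition C_law : Prop :=
  forall x y z, op x (op y (op y z)) = op (op (op x y) y) z.

Definition left_nucleus (a : L) : Prop :=
  forall y z, op a (op y z) = op (op a y) z.
Definition middle_nucleus (a : L) : Prop :=
  forall y z, op y (op a z) = op (op y a) z.
Definition right_nucleus (a : L) : Prop :=
  forall y z, op y (op z a) = op (op y z) a.
Definition nucleus (a : L) : Prop :=
  left_nucleus a /\ middle_nucleus a /\ right_nucleus a.

Definition subloop (K : L -> Prop) : Prop :=
  K e /\
  (forall a b, K a -> K b -> K (op a b)) /\
  (forall a b x, K a -> K b -> op a x = b -> K x) /\
  (forall a b y, K a -> K b -> op y a = b -> K y).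

Definition lcoset (x : L) (K : L -> Prop) (z : L) : Prop :=
  exists k, K k /\ z = op x k.
Definition rcoset (K : L -> Prop) (x : L) (z : L) : Prop :=
  exists k, K k /\ z = op k x.

(* Normal subloop: xK = Kx, x(yK) = (xy)K, x(Ky) = (xK)y. *)
Definition normal_subloop (K : L -> Prop) : Prop :=
  subloop K /\
  (forall x z, lcoset x K z <-> rcoset K x z) /\
  (forall x y z, (exists k, K k /\ z = op x (op y k)) <->
                 (exists k, K k /\ z = op (op x y) k)) /\
  (forall x y z, (exists k, K k /\ z = op x (op k y)) <->
                 (exists k, K k /\ z = op (op x k) y)).

Definition normal_subgroup (K : L -> Prop) : Prop :=
  normal_subloop K /\
  (forall a b c, K a -> K b -> K c -> op a (op b c) = op (op a b) c).

End LoopDefs.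

(* Main.v *)
Require Import Defs.
From Stdlib Require Import IndefiniteDescription.

Theorem proposition2p5 (L : Type) (op : L -> L -> L) (e : L)
  (HL : is_loop op e) (HC : C_law op) :
  normal_subloop op e (nucleus op) /\ normal_subgroup op e (nucleus op).
Proof.
  destruct HL as [Hid [Hr Hl]].
  assert (eL : forall x, op e x = x) by (intro x; apply (Hid x)).
  assert (eR : forall x, op x e = x) by (intro x; apply (Hid x)).
  assert (lcan : forall a x y, op a x = op a y -> x = y).
  { intros a x y H. destruct (Hr a (op a x)) as [w [_ Hw]].
    rewrite <- (Hw x eq_refl), <- (Hw y (eq_sym H)). reflexivity. }
  assert (rcan : forall a x y, op x a = op y a -> x = y).
  { intros a x y H. destruct (Hl a (op x a)) as [w [_ Hw]].
    rewrite <- (Hw x eq_refl), <- (Hw y (eq_sym H)). reflexivity. }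
  assert (Hex : forall a, exists x, op a x = e).
  { intro a. destruct (Hr a e) as [x [Hx _]]. exists x; exact Hx. }
  assert (Hinv : exists inv : L -> L, forall a, op a (inv a) = e).
  { exists (fun a => proj1_sig (constructive_indefinite_description _
                     (Hex a))).
    intro a. exact (proj2_sig (constructive_indefinite_description _
                     (Hex a))). }
  destruct Hinv as [inv Hinv].
  assert (LA : forall y z, op y (op y z) = op (op y y) z).
  { intros y z. pose proof (HC e y z) as H. rewrite !eL in H. exact H. }
  assert (RA : forall x y, op x (op y y) = op (op x y) y).
  { intros x y. pose proof (HC x y e) as H. rewrite !eR in H. exact H. }
  assert (RIP : forall w y, op (op w y) (inv y) = w).
  { intros w y. destruct (Hl y w) as [x [Hx _]]. subst w.
    pose proof (HC x y (inv y)) as H. rewrite Hinv, eR in H. symmetry; exact H. }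
  assert (Hinvl : forall y, op (inv y) y = e).
  { intro y. destruct (Hl y e) as [l [Hly _]].
    assert (H1 : forall v, op l (op y v) = v).
    { intro v. destruct (Hr y v) as [z [Hz _]]. subst v.
      pose proof (HC l y z) as H. rewrite Hly, !eL in H. exact H. }
    pose proof (H1 (inv y)) as H2. rewrite Hinv, eR in H2.
    rewrite <- H2. exact Hly. }
  assert (LIP : forall y v, op (inv y) (op y v) = v).
  { intros y v. destruct (Hr y v) as [z [Hz _]]. subst v.
    pose proof (HC (inv y) y z) as H. rewrite Hinvl, !eL in H. exact H. }
  assert (invinv : forall y, inv (inv y) = y).
  { intro y. apply (lcan (inv y)). rewrite Hinv, Hinvl. reflexivity. }
  assert (RIP' : forall w y, op (op w (inv y)) y = w).
  { intros w y. rewrite <- (invinv y) at 2. apply RIP. }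
  assert (LIP' : forall y v, op y (op (inv y) v) = v).
  { intros y v. rewrite <- (invinv y) at 1. apply LIP. }
  assert (Nmul : forall a b, nucleus op a -> nucleus op b -> nucleus op (op a b)).
  { intros a b [aL [aM aR]] [bL [bM bR]]. split; [|split].
    - intros y z. rewrite <- (aL b (op y z)), (bL y z), (aL (op b y) z), (aL b y). reflexivity.
    - intros y z. rewrite <- (aL b z), (aM y (op b z)), (bM (op y a) z), (bR y a). reflexivity.
    - intros y z. rewrite (bR z a), (bR y (op z a)), (aR y z), (bR (op y z) a). reflexivity. }
  assert (Ninv : forall a, nucleus op a -> nucleus op (inv a)).
  { intros a [aL [aM aR]]. split; [|split].
    - intros y z. apply (lcan a). rewrite LIP', aL, LIP'. reflexivity.
    - intros y z. rewrite <- (RIP' y a) at 1. rewrite <- aM, LIP'. reflexivity.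
    - intros y z. apply (rcan a). rewrite RIP', <- aR, RIP'. reflexivity. }
  assert (Ne : nucleus op e).
  { split; [|split]; intros y z; rewrite ?eL, ?eR; reflexivity. }
  assert (sqM : forall y, middle_nucleus op (op y y)).
  { intros y a c. rewrite <- LA, HC, RA. reflexivity. }
  assert (MtoR : forall a, middle_nucleus op a -> right_nucleus op a).
  { intros a aM v u.
    assert (H : op (op (op v u) a) (op (inv a) (inv u)) = v).
    { rewrite <- aM, LIP', RIP. reflexivity. }
    assert (HQ : op (inv a) (inv u) = inv (op u a)).
    { apply (lcan (op u a)). rewrite Hinv, <- aM, LIP', Hinv. reflexivity. }
    rewrite HQ in H. rewrite <- (RIP (op (op v u) a) (inv (op u a))), H, invinv.
    reflexivity. }
  assert (MtoL : forall a, middle_nucleus op a -> left_nucleus op (inv a)).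
  { intros a aM u v.
    assert (H : op (op (inv u) a) (op (inv a) (op u v)) = v).
    { rewrite <- aM, LIP', LIP. reflexivity. }
    assert (HP : inv (op (inv u) a) = op (inv a) u).
    { apply (lcan (op (inv u) a)). rewrite Hinv, <- aM, LIP', Hinvl. reflexivity. }
    rewrite <- HP. rewrite <- H at 2. rewrite LIP. reflexivity. }
  assert (sqinv : forall y, inv (op y y) = op (inv y) (inv y)).
  { intro y. apply (lcan (op y y)). rewrite Hinv, RA, RIP, Hinv. reflexivity. }
  assert (sqN : forall y, nucleus op (op y y)).
  { intro y. split; [|split].
    - replace (op y y) with (inv (op (inv y) (inv y))).
      + apply MtoL, sqM.
      + rewrite sqinv, invinv. reflexivity.
    - apply sqM.
    - apply MtoR, sqM. }
  assert (Hsg : forall a b c, nucleus op a -> nucleus op b -> nucleus op c ->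
                 op a (op b c) = op (op a b) c).
  { intros a b c [aL _] _ _. apply aL. }
  assert (Hsub : subloop op e (nucleus op)).
  { split; [exact Ne|split; [exact Nmul|split]].
    - intros a b x Ha Hb Hx. rewrite <- (LIP a x), Hx. apply Nmul; auto.
    - intros a b y Ha Hb Hy. rewrite <- (RIP y a), Hy. apply Nmul; auto. }
  assert (Km : forall x n, nucleus op n -> nucleus op (op (op x n) x)).
  { intros x n Hn. destruct Hn as [nL [nM nR]].
    replace (op (op x n) x) with (op (op (op x n) (op x n)) (inv n)).
    - apply Nmul; [apply sqN | apply Ninv; split; auto].
    - rewrite (nR (op x n) x), RIP. reflexivity. }
  assert (Hnorm : normal_subloop op e (nucleus op)).
  { split; [exact Hsub|split; [|split]].
    - intros x z. split.
      + intros [n [Hn Hz]]. subst z.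
        exists (op (op (op x n) x) (op (inv x) (inv x))). split.
        * apply Nmul; [apply Km; exact Hn | apply sqN].
        * destruct (sqN (inv x)) as [_ [_ tR]].
          rewrite <- (tR (op x n) x), RA, Hinv, eL, RIP'. reflexivity.
      + intros [n [Hn Hz]]. subst z.
        exists (op (op (inv x) (inv x)) (op (op x n) x)). split.
        * apply Nmul; [apply sqN | apply Km; exact Hn].
        * destruct (sqN (inv x)) as [tL _]. destruct Hn as [_ [nM _]].
          rewrite <- (nM x x), (tL x (op n x)), <- LA, Hinvl, eR, LIP'. reflexivity.
    - intros x y z. split.
      + intros [k [Hk Hz]]. exists k. split; [exact Hk|]. rewrite Hz.
        destruct Hk as [_ [_ kR]]. apply kR.
      + intros [k [Hk Hz]]. exists k. split; [exact Hk|]. rewrite Hz.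
        destruct Hk as [_ [_ kR]]. symmetry; apply kR.
    - intros x y z. split.
      + intros [k [Hk Hz]]. exists k. split; [exact Hk|]. rewrite Hz.
        destruct Hk as [_ [kM _]]. apply kM.
      + intros [k [Hk Hz]]. exists k. split; [exact Hk|]. rewrite Hz.
        destruct Hk as [_ [kM _]]. symmetry; apply kM. }
  split; [exact Hnorm | split; [exact Hnorm | exact Hsg]].
Qed.
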